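(* Let $I,I'\subsetneq S$ and let $X,X'\subsetneq S$ with $\tau(I)\subset X$ and $\tau(I')\subset X'$. If $w_Ih_X=w_{I'}h_{X'}$ in $W$, then $I=I'$ and $X=X'$.
   Context: $(W,S)$ is the affine Weyl group of type $\tilde A_{n-1}$ ($n\ge2$), with $S=\{s_i:i\in\mathbb Z/n\mathbb Z\}$ identified with $\mathbb Z/n\mathbb Z$, and $\tau(s_i)=s_{i+1}$ (extended to subsets). For $X\subsetneq S$, choose $\aleph\in S\setminus X$, order $S$ as $\aleph<\aleph+1<\dots<\aleph-1$, write $X=\{x_1<\dots<x_d\}$ and set $h_X=s_{x_d}\cdots s_{x_1}$ (independent of $\aleph$). For $I\subsetneq S$, $w_I$ is the longest element of the finite parabolic subgroup $W_I$. *)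

(* Defs.v *)
(* Model of the affine Weyl group of type ~A_{n-1} as the
   group of affine permutations of Z (a faithful representation). *)
From mathcomp Require Import all_boot all_order all_algebra.
Set Implicit Arguments. Unset Strict Implicit. Unset Printing Implicit Defensive.
Import Order.TTheory GRing.Theory Num.Theory.

Definition srefl (n : nat) (i : 'I_n) (x : int) : int :=
  let r := intdiv.modz x (Posz n) in
  if r == Posz (i : nat) then (x + 1)%R
  else if r == Posz (i.+1 %% n)%N then (x - 1)%R
  else x.

(* A word [:: a1; ...; ak] represents the product s_{a1} s_{a2} ... s_{ak}
   (product = composition of maps, so s_{ak} acts first). *)
Fixpoint wact (n : nat) (w : seq 'I_n) (x : int) : int :=
  match w with
  | [::] => x
  | a :: w' => srefl a (wact w' x)
  end.

Definition weq (n : nat) (u v : seq 'I_n) : Prop := forall x, wact u x = wact v x.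

(* ell(u) <= ell(v), where ell is Coxeter length (minimal word length). *)
Definition ell_le (n : nat) (u v : seq 'I_n) : Prop :=
  forall v', weq v v' -> exists2 u', weq u u' & size u' <= size v'.

Definition is_longest (n : nat) (I : {set 'I_n}) (u : seq 'I_n) : Prop :=
  all (fun a => a \in I) u /\
  forall v : seq 'I_n, all (fun a => a \in I) v -> ell_le v u.

Definition tauS (n : nat) (I : {set 'I_n}) : {set 'I_n} := [set ordS i | i in I].

(* h_X = s_{x_d} ... s_{x_1} where x_1 < ... < x_d in the order
   aleph < aleph+1 < ... < aleph-1, for some aleph not in X (here: a picked one). *)
Definition aleph (n : nat) (X : {set 'I_n}) : nat :=
  if [pick a in ~: X] is Some a then (a : nat) else 0.

Definition hkey (n : nat) (X : {set 'I_n}) (x : 'I_n) : nat :=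
  ((x : nat) + n - aleph X) %% n.

Definition hword (n : nat) (X : {set 'I_n}) : seq 'I_n :=
  rev (sort (fun x y => hkey X x <= hkey X y) (enum X)).

(* Main.v *)
Require Import Defs.
From mathcomp Require Import all_boot all_order all_algebra zify.
Set Implicit Arguments. Unset Strict Implicit. Unset Printing Implicit Defensive.
Import Order.TTheory GRing.Theory Num.Theory intdiv.
Section Aff.
Local Open Scope ring_scope.
Variable n : nat.
Hypothesis hn : (1 < n)%N.

Lemma n_gt0 : (0 < n)%N. Proof. by apply: ltn_trans hn. Qed.
Lemma nZ_gt0 : 0 < n%:Z. Proof. by rewrite ltz_nat n_gt0. Qed.
Lemma nZ_neq0 : n%:Z != 0. Proof. by rewrite gt_eqF // nZ_gt0. Qed.

Definition res (z : int) : nat := `|(z %% n)%Z|%N.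

Lemma resE z : (z %% n)%Z = (res z)%:Z.
Proof. by rewrite /res gez0_abs // modz_ge0 // nZ_neq0. Qed.

Lemma res_lt z : (res z < n)%N.
Proof. by rewrite -ltz_nat -resE ltz_pmod // nZ_gt0. Qed.

Lemma res_nat (k : nat) : (k < n)%N -> res k = k.
Proof. by move=> h; rewrite /res modz_nat modn_small. Qed.

Lemma divz_res z : z = (z %/ n)%Z * n + (res z)%:Z.
Proof. by rewrite -resE -divz_eq. Qed.

Lemma resMD z (t:int) : res (z + t * n) = res z.
Proof. by rewrite /res (addrC z) modzMDl. Qed.

Lemma resS z : res (z + 1) = ((res z).+1 %% n)%N.
Proof.
have h : ((z + 1) %% n)%Z = (((res z).+1 : nat) %% n)%Z.
  by rewrite -modzDml (resE z) intS addrC.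
by rewrite /res h modz_nat absz_nat.
Qed.

Lemma res_eq (x y : int) : res x = res y -> y = x + (divz y n - divz x n) * n.
Proof.
move=> h; have := divz_res x; have := divz_res y; rewrite h; lia.
Qed.

Lemma succ_inj (a b : nat) : (a < n)%N -> (b < n)%N -> (a.+1 %% n = b.+1 %% n)%N -> a = b.
Proof.
move=> ha hb.
have E : forall c, (c < n)%N -> (c.+1 %% n = if c.+1 == n then 0 else c.+1)%N.
  move=> c hc; case: eqP => [->|ne]; first by rewrite modnn.
  by rewrite modn_small //; lia.
rewrite (E a ha) (E b hb); do 2 case: eqP; lia.
Qed.


Lemma srefl_E (a : 'I_n) z : srefl a z =
  if res z == a then z + 1 else if res z == (a.+1 %% n)%N then z - 1 else z.
Proof. by rewrite /srefl resE !eqz_nat. Qed.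


Lemma succ_neq (a : nat) : (a < n)%N -> (a.+1 %% n)%N != a.
Proof.
move=> ha; case: (ltnP a.+1 n) => h; first by rewrite modn_small // gtn_eqF.
have -> : a.+1 = n by lia.
rewrite modnn; lia.
Qed.

Lemma resB z : res z = ((res (z - 1)).+1 %% n)%N.
Proof. by rewrite -resS subrK. Qed.

Lemma srefl_inv (a : 'I_n) z : srefl a (srefl a z) = z.
Proof.
rewrite (srefl_E a z); case: eqP => [h1|h1].
  rewrite srefl_E resS h1 (negbTE (succ_neq (ltn_ord a))) eqxx; lia.
case: eqP => [h2|h2].
  have h3 : res (z - 1) = a.
    apply: succ_inj; [exact: res_lt| exact: ltn_ord|by rewrite -resB].
  rewrite srefl_E h3 eqxx; lia.
by rewrite srefl_E; move/eqP/negbTE: h1 => ->; move/eqP/negbTE: h2 => ->.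
Qed.

Lemma srefl_inj (a : 'I_n) : injective (srefl a).
Proof. exact: (can_inj (srefl_inv a)). Qed.

Lemma srefl_aff (a : 'I_n) z (t : int) : srefl a (z + t * n) = srefl a z + t * n.
Proof. rewrite !srefl_E resMD; case: ifP => _; last case: ifP => _; lia. Qed.

Lemma srefl_near (a : 'I_n) z : z - 1 <= srefl a z <= z + 1.
Proof. rewrite srefl_E; case: ifP => _; last case: ifP => _; lia. Qed.

Lemma srefl_up (a : 'I_n) z : res z = a -> srefl a z = z + 1.
Proof. by move=> h; rewrite srefl_E h eqxx. Qed.

Lemma srefl_down (a : 'I_n) z : res z = a -> srefl a (z + 1) = z.
Proof.
move=> h; rewrite srefl_E resS h (negbTE (succ_neq (ltn_ord a))) eqxx; lia.
Qed.

Lemma srefl_mono (a : 'I_n) u v : u < v -> ~~ ((v == u + 1) && (res u == a)) ->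
  srefl a u < srefl a v.
Proof.
move=> uv h.
have ne : srefl a u != srefl a v.
  by apply/eqP => /srefl_inj e; move: uv; rewrite e ltxx.
have := srefl_near a u; have := srefl_near a v.
case: (boolP (v == u + 1)) => [/eqP ev|nev].
  move: h; rewrite ev eqxx /= => h.
  have : srefl a u <= u.
    by rewrite srefl_E (negbTE h); case: ifP => _; lia.
  move: ne; rewrite -ev; move=> /eqP ne; lia.
move/eqP: ne => ne; move/eqP: nev => nev; lia.
Qed.

Lemma wact_cat (u v : seq 'I_n) x : wact (u ++ v) x = wact u (wact v x).
Proof. by elim: u => //= a u ->. Qed.

Lemma wact_rev_cancel (u : seq 'I_n) x : wact (rev u) (wact u x) = x.
Proof.
elim: u => //= a u IH.
by rewrite rev_cons -cats1 wact_cat /= srefl_inv IH.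
Qed.

Lemma wact_cancel_rev (u : seq 'I_n) x : wact u (wact (rev u) x) = x.
Proof. by have := wact_rev_cancel (rev u) x; rewrite revK. Qed.

Lemma wact_inj (u : seq 'I_n) : injective (wact u).
Proof. exact: (can_inj (wact_rev_cancel u)). Qed.

Lemma wact_aff (u : seq 'I_n) z (t : int) : wact u (z + t * n) = wact u z + t * n.
Proof. by elim: u => //= a u ->; rewrite srefl_aff. Qed.


Lemma nat_diff (a b : int) : a <= b -> exists k : nat, b = a + k%:Z.
Proof. move=> h; exists `|b - a|%N; rewrite gez0_abs ?subr_ge0 //; lia. Qed.

Definition ro z : 'I_n := Ordinal (res_lt z).
Definition inR (A : {set 'I_n}) z := ro z \in A.

Lemma ro_aff z (t : int) : ro (z + t * n) = ro z.
Proof. by apply: val_inj; rewrite /= resMD. Qed.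

Lemma inR_aff A z (t : int) : inR A (z + t * n) = inR A z.
Proof. by rewrite /inR ro_aff. Qed.

Lemma ro_nat (i : 'I_n) : ro (i : nat)%:Z = i.
Proof. by apply: val_inj; rewrite /= res_nat. Qed.

Lemma ro_res z (i : 'I_n) : res z = i -> ro z = i.
Proof. by move=> h; apply: val_inj. Qed.

Definition blk (A : {set 'I_n}) x y : Prop := forall z, (x <= z < y) || (y <= z < x) -> inR A z.

Lemma blk_sym (A : {set 'I_n}) x y : blk A x y -> blk A y x.
Proof. by move=> h z hz; apply: h; rewrite orbC. Qed.

Lemma blk_trans (A : {set 'I_n}) x y w : blk A x y -> blk A y w -> blk A x w.
Proof.
move=> h1 h2 z hz.
case: (boolP ((x <= z < y) || (y <= z < x))) => [|h]; first exact: h1.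
apply: h2; move: h hz; rewrite !negb_or !negb_and -!ltNge -!leNgt; lia.
Qed.

Lemma blk_srefl (A : {set 'I_n}) (a : 'I_n) x : a \in A -> blk A x (srefl a x).
Proof.
move=> aA z; rewrite srefl_E; case: eqP => [h1|_].
  move=> hz; have -> : z = x by lia.
  by rewrite /inR (ro_res h1).
case: eqP => [h2|_]; last by lia.
move=> hz; have -> : z = x - 1 by lia.
rewrite /inR (@ro_res _ a) //; apply: succ_inj; [exact: res_lt|exact: ltn_ord|by rewrite -resB].
Qed.

Lemma blk_wact (A : {set 'I_n}) (u : seq 'I_n) x : all (fun a => a \in A) u -> blk A x (wact u x).
Proof.
elim: u => [|a u IH] /=; first by move=> _ z; lia.
move=> /andP[aA uA]; apply: blk_trans (IH uA) _; exact: blk_srefl.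
Qed.

Lemma exists_notin (A : {set 'I_n}) : A != setT -> exists j : 'I_n, j \notin A.
Proof.
move=> h; apply/existsP; move: h; apply: contraR; rewrite negb_exists => /forallP h.
by apply/eqP/setP => j; rewrite inE; move: (h j); rewrite negbK.
Qed.

Lemma ro_hit (x : int) (j : 'I_n) : ro (x + modz ((j : nat)%:Z - x) n) = j.
Proof.
apply: ro_res; rewrite /res modzDmr.
by rewrite addrC subrK modz_nat modn_small.
Qed.

Lemma blk_lt (A : {set 'I_n}) x y : A != setT -> blk A x y -> x <= y -> y - x < n.
Proof.
move=> /exists_notin [j jA] h xy; rewrite ltNge; apply/negP => nxy.
have := h (x + modz ((j : nat)%:Z - x) n).
have := modz_ge0 ((j : nat)%:Z - x) nZ_neq0.
have := ltz_pmod ((j : nat)%:Z - x) nZ_gt0.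
move=> h1 h2 h3; have := h3 ltac:(lia).
by rewrite /inR ro_hit (negbTE jA).
Qed.

Lemma hi_ex (A : {set 'I_n}) x : A != setT ->
  exists hi, [/\ x <= hi, (forall z, x <= z < hi -> inR A z) & ~~ inR A hi].
Proof.
move=> /exists_notin [j jA].
have key : forall (k : nat) x, ~~ inR A (x + k%:Z) ->
   exists hi, [/\ x <= hi, (forall z, x <= z < hi -> inR A z) & ~~ inR A hi].
  elim=> [|k IH] y hy.
    by exists y; split; [lia| move=> z; lia| rewrite addr0 in hy].
  case: (boolP (inR A y)) => hy0; last by exists y; split; [lia|move=> z; lia|].
  have [hi [h1 h2 h3]] := IH (y + 1) ltac:(by rewrite -addrA -intS).
  exists hi; split => //; first lia.
  move=> z hz; case: (eqVneq z y) => [->//|ne]; apply: h2; lia.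
apply: (key `|modz ((j : nat)%:Z - x) n|%N).
by rewrite gez0_abs ?modz_ge0 ?nZ_neq0 // /inR ro_hit.
Qed.

Lemma lo_ex (A : {set 'I_n}) x : A != setT ->
  exists lo, [/\ lo <= x, (forall z, lo <= z < x -> inR A z) & ~~ inR A (lo - 1)].
Proof.
move=> /exists_notin [j jA].
have key : forall (k : nat) x, ~~ inR A (x - 1 - k%:Z) ->
   exists lo, [/\ lo <= x, (forall z, lo <= z < x -> inR A z) & ~~ inR A (lo - 1)].
  elim=> [|k IH] y hy.
    by exists y; split; [lia| move=> z; lia| rewrite subr0 in hy].
  case: (boolP (inR A (y - 1))) => hy0; last by exists y; split; [lia|move=> z; lia|].
  have [lo [h1 h2 h3]] := IH (y - 1) ltac:(by rewrite intS opprD addrA in hy).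
  exists lo; split => //; first lia.
  move=> z hz; case: (eqVneq z (y - 1)) => [->//|ne]; apply: h2; lia.
apply: (key `|modz (x - 1 - (j : nat)%:Z) n|%N).
rewrite gez0_abs ?modz_ge0 ?nZ_neq0 //.
have -> : x - 1 - modz (x - 1 - (j : nat)%:Z) n =
          (j : nat)%:Z + divz (x - 1 - (j : nat)%:Z) n * n.
  by have := divz_eq (x - 1 - (j : nat)%:Z) n; lia.
by rewrite inR_aff /inR ro_nat.
Qed.


Lemma chain_inc (A : {set 'I_n}) (m : int -> int) :
  (forall p, inR A p -> m p < m (p + 1)) ->
  forall (k : nat) a, (forall z, a <= z < a + k%:Z -> inR A z) -> m a + k%:Z <= m (a + k%:Z).
Proof.
move=> hm; elim=> [|k IH] a ha; first by rewrite !addr0.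
have h1 := IH a ltac:(move=> z hz; apply: ha; lia).
have h2 := hm (a + k%:Z) ltac:(apply: ha; lia).
have -> : a + k.+1%:Z = a + k%:Z + 1 by rewrite intS; lia.
rewrite intS; move: h1 h2; set u := m (a + k); set v := m (a + k + 1); set w := m a; lia.
Qed.

Lemma chain_dec (A : {set 'I_n}) (m : int -> int) :
  (forall p, inR A p -> m (p + 1) < m p) ->
  forall (k : nat) a, (forall z, a <= z < a + k%:Z -> inR A z) -> m (a + k%:Z) + k%:Z <= m a.
Proof.
move=> hm; elim=> [|k IH] a ha; first by rewrite !addr0.
have h1 := IH a ltac:(move=> z hz; apply: ha; lia).
have h2 := hm (a + k%:Z) ltac:(apply: ha; lia).
have -> : a + k.+1%:Z = a + k%:Z + 1 by rewrite intS; lia.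
rewrite intS; move: h1 h2; set u := m (a + k); set v := m (a + k + 1); set w := m a; lia.
Qed.

Lemma blk_range (A : {set 'I_n}) (m : int -> int) lo hi x :
  (forall y, blk A y (m y)) -> lo <= x <= hi ->
  ~~ inR A (lo - 1) -> ~~ inR A hi -> lo <= m x <= hi.
Proof.
move=> hb hx hlo hhi; have := hb x.
case: (ltP hi (m x)) => h1.
  by move=> /(_ hi) h; rewrite (h ltac:(lia)) in hhi.
case: (ltP (m x) lo) => h2.
  by move=> /(_ (lo - 1)) h; rewrite (h ltac:(lia)) in hlo.
move=> _; lia.
Qed.

Lemma inc_id (A : {set 'I_n}) (m : int -> int) : A != setT ->
  (forall y, blk A y (m y)) -> (forall p, inR A p -> m p < m (p + 1)) ->
  forall x, m x = x.
Proof.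
move=> hA hb hm x.
have [lo [l1 l2 l3]] := lo_ex x hA.
have [hi [h1 h2 h3]] := hi_ex x hA.
have [k1 e1] := nat_diff l1.
have [k2 e2] := nat_diff h1.
have c1 := @chain_inc A m hm k1 lo ltac:(move=> z hz; case: (ltP z x) => hzx;
   [apply: l2; lia| apply: h2; lia]).
have c2 := @chain_inc A m hm k2 x ltac:(move=> z hz; apply: h2; lia).
have r1 := @blk_range A m lo hi lo hb ltac:(lia) l3 h3.
have r2 := @blk_range A m lo hi hi hb ltac:(lia) l3 h3.
rewrite -e1 in c1; rewrite -e2 in c2; lia.
Qed.

Lemma dec_rev (A : {set 'I_n}) (m : int -> int) :
  (forall y, blk A y (m y)) -> (forall p, inR A p -> m (p + 1) < m p) ->
  forall lo hi x, lo <= x <= hi -> (forall z, lo <= z < hi -> inR A z) ->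
  ~~ inR A (lo - 1) -> ~~ inR A hi -> m x = lo + hi - x.
Proof.
move=> hb hm lo hi x hx hin l3 h3.
have [k1 e1] := nat_diff (proj1 (andP hx)).
have [k2 e2] := nat_diff (proj2 (andP hx)).
have c1 := @chain_dec A m hm k1 lo ltac:(move=> z hz; apply: hin; lia).
have c2 := @chain_dec A m hm k2 x ltac:(move=> z hz; apply: hin; lia).
have r1 := @blk_range A m lo hi lo hb ltac:(lia) l3 h3.
have r2 := @blk_range A m lo hi hi hb ltac:(lia) l3 h3.
rewrite -e1 in c1; rewrite -e2 in c2; lia.
Qed.


Definition F (A : {set 'I_n}) (w : int -> int) (x k : 'I_n) : bool :=
  [&& (0 < k)%N, [forall t : 'I_n, (t < k)%N ==> inR A ((x : nat)%:Z + (t : nat)%:Z)]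
    & w ((x : nat)%:Z + (k : nat)%:Z) < w (x : nat)%:Z].

Definition f (A : {set 'I_n}) (w : int -> int) : nat := \sum_(p : 'I_n * 'I_n) F A w p.1 p.2.

Lemma f_ext (A : {set 'I_n}) (w1 w2 : int -> int) : (forall x, w1 x = w2 x) -> f A w1 = f A w2.
Proof. by move=> e; apply: eq_bigr => p _; rewrite /F !e. Qed.

Lemma D_char (A : {set 'I_n}) (a : 'I_n) (w : int -> int) (x k : 'I_n) : injective w ->
  F A (fun z => srefl a (w z)) x k != F A w x k ->
  (0 < k)%N /\ exists q : int, res q = (a : nat) /\
   ((w (x : nat)%:Z = q /\ w ((x : nat)%:Z + (k : nat)%:Z) = q + 1) \/
    (w (x : nat)%:Z = q + 1 /\ w ((x : nat)%:Z + (k : nat)%:Z) = q)).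
Proof.
move=> winj; rewrite /F; case: (posnP k) => [->//|kpos] /= hne0; split => //.
set u1 := w (x : nat)%:Z; set u2 := w ((x : nat)%:Z + (k : nat)%:Z).
have hne : (srefl a u2 < srefl a u1) != (u2 < u1).
  by move: hne0; case: [forall t : 'I_n, _].
have ne : u1 != u2.
  apply/eqP => /winj; lia.
case: (ltgtP u1 u2) => h; last by move: ne; rewrite h eqxx.
- case: (boolP ((u2 == u1 + 1) && (res u1 == a))) => [/andP[/eqP e1 /eqP e2]|hh].
    by exists u1; split => //; left.
  have s1 := srefl_mono h hh.
  by move: hne; rewrite ltNge (ltW s1) ltNge (ltW h).
- case: (boolP ((u1 == u2 + 1) && (res u2 == a))) => [/andP[/eqP e1 /eqP e2]|hh].
    by exists u2; split => //; right.
  have s1 := srefl_mono h hh.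
  by move: hne; rewrite s1 h.
Qed.

Lemma t_zero (a b t : int) : 0 <= a < n -> 0 <= b < n -> b = a + t * n -> t = 0.
Proof.
move=> ha hb e; have := nZ_gt0; nia.
Qed.

Lemma D_uniq (a : 'I_n) (w : int -> int) (x1 k1 x2 k2 : 'I_n) : injective w ->
  (forall z (t : int), w (z + t * n) = w z + t * n) ->
  (0 < k1)%N /\ (exists q : int, res q = (a : nat) /\
   ((w (x1 : nat)%:Z = q /\ w ((x1 : nat)%:Z + (k1 : nat)%:Z) = q + 1) \/
    (w (x1 : nat)%:Z = q + 1 /\ w ((x1 : nat)%:Z + (k1 : nat)%:Z) = q))) ->
  (0 < k2)%N /\ (exists q : int, res q = (a : nat) /\
   ((w (x2 : nat)%:Z = q /\ w ((x2 : nat)%:Z + (k2 : nat)%:Z) = q + 1) \/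
    (w (x2 : nat)%:Z = q + 1 /\ w ((x2 : nat)%:Z + (k2 : nat)%:Z) = q))) ->
  (x1, k1) = (x2, k2).
Proof.
move=> winj waff [k1p [q1 [r1 c1]]] [k2p [q2 [r2 c2]]].
have eq := res_eq (etrans r1 (esym r2)).
set t := (divz q2 n - divz q1 n) in eq.
have hx1 : 0 <= (x1 : nat)%:Z < n by have := ltn_ord x1; lia.
have hx2 : 0 <= (x2 : nat)%:Z < n by have := ltn_ord x2; lia.
have fin : (x2 : nat)%:Z = (x1 : nat)%:Z + t * n -> (k2 : nat)%:Z = (k1 : nat)%:Z -> (x1, k1) = (x2, k2).
  move=> e1 e2; have t0 := t_zero hx1 hx2 e1; rewrite t0 mul0r addr0 in e1.
  by congr pair; apply: val_inj; apply/eqP; rewrite -eqz_nat; apply/eqP.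
case: c1 => [[e1 e1']|[e1 e1']]; case: c2 => [[e2 e2']|[e2 e2']].
- have ex : (x2 : nat)%:Z = (x1 : nat)%:Z + t * n.
    by apply: winj; rewrite waff e2 e1 eq.
  apply: fin => //.
  have : (x2 : nat)%:Z + (k2 : nat)%:Z = (x1 : nat)%:Z + (k1 : nat)%:Z + t * n.
    by apply: winj; rewrite waff e2' e1' eq; lia.
  lia.
- exfalso.
  have ex : (x2 : nat)%:Z = (x1 : nat)%:Z + (k1 : nat)%:Z + t * n.
    by apply: winj; rewrite waff e2 e1' eq; lia.
  have : (x2 : nat)%:Z + (k2 : nat)%:Z = (x1 : nat)%:Z + t * n.
    by apply: winj; rewrite waff e2' e1 eq.
  lia.
- exfalso.
  have ex : (x2 : nat)%:Z = (x1 : nat)%:Z + (k1 : nat)%:Z + t * n.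
    by apply: winj; rewrite waff e2 e1' eq; lia.
  have : (x2 : nat)%:Z + (k2 : nat)%:Z = (x1 : nat)%:Z + t * n.
    by apply: winj; rewrite waff e2' e1 eq; lia.
  lia.
- have ex : (x2 : nat)%:Z = (x1 : nat)%:Z + t * n.
    by apply: winj; rewrite waff e2 e1 eq; lia.
  apply: fin => //.
  have : (x2 : nat)%:Z + (k2 : nat)%:Z = (x1 : nat)%:Z + (k1 : nat)%:Z + t * n.
    by apply: winj; rewrite waff e2' e1' eq.
  lia.
Qed.


Lemma f_step (A : {set 'I_n}) (a : 'I_n) (w : int -> int) : injective w ->
  (forall z (t : int), w (z + t * n) = w z + t * n) ->
  (f A (fun z => srefl a (w z)) <= f A w + 1)%N.
Proof.
move=> winj waff.
set D := [set p : 'I_n * 'I_n | F A (fun z => srefl a (w z)) p.1 p.2 != F A w p.1 p.2].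
have cD : (#|D| <= 1)%N.
  apply/card_le1_eqP => [[x1 k1] [x2 k2]]; rewrite !inE /= => h1 h2.
  apply: (@D_uniq a w) => //; [exact: D_char h2|exact: D_char h1].
have : (f A (fun z => srefl a (w z)) <= f A w + #|D|)%N.
  rewrite /f -sum1_card [X in (_ <= _ + X)%N]big_mkcond -big_split /=; apply: leq_sum => p _; rewrite inE.
  case: (boolP (_ != _)) => h /=; first by case: (F _ _ _ _); case: (F _ _ _ _).
  by move/negPn/eqP: h => ->; rewrite addn0.
lia.
Qed.

Lemma f_nil (A : {set 'I_n}) : f A (@wact n [::]) = 0%N.
Proof.
rewrite /f big1 // => p _; rewrite /F /=.
have -> : ((p.1 : nat)%:Z + (p.2 : nat)%:Z < (p.1 : nat)%:Z) = false by lia.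
by rewrite !andbF.
Qed.

Lemma L1 (A : {set 'I_n}) (u : seq 'I_n) : (f A (wact u) <= size u)%N.
Proof.
elim: u => [|a u IH]; first by rewrite f_nil.
have -> : f A (wact (a :: u)) = f A (fun z => srefl a (wact u z)) by [].
have := f_step A a (@wact_inj u) (@wact_aff u); rewrite /=; lia.
Qed.

Lemma f_exact (A : {set 'I_n}) (a : 'I_n) (w : int -> int) xp yp p :
  A != setT -> a \in A -> injective w ->
  (forall z (t : int), w (z + t * n) = w z + t * n) ->
  (forall y, blk A y (w y)) -> w xp = p -> w yp = p + 1 -> res p = a -> xp < yp ->
  f A (fun z => srefl a (w z)) = (f A w).+1.
Proof.
move=> hA aA winj waff hb wx wy rp lxy.
have bxy : blk A xp yp.
  apply: blk_trans (hb xp) _; rewrite wx.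
  apply: blk_trans (blk_sym (hb yp)); rewrite wy.
  move=> z hz; have -> : z = p by lia.
  by rewrite /inR (ro_res rp).
have klt := blk_lt hA bxy (ltW lxy).
set t := divz xp n.
have ex := divz_res xp; rewrite -/t in ex.
set kk := `|yp - xp|%N.
have ekk : kk%:Z = yp - xp by rewrite /kk gez0_abs //; lia.
have kklt : (kk < n)%N by rewrite -ltz_nat ekk.
have kkp : (0 < kk)%N by rewrite -ltz_nat ekk; lia.
pose x0 := ro xp; pose k0 := Ordinal kklt.
have w0 : w (x0 : nat)%:Z = p - t * n.
  have -> : (x0 : nat)%:Z = xp + (- t) * n by rewrite /=; lia.
  by rewrite waff wx; lia.
have w1 : w ((x0 : nat)%:Z + (k0 : nat)%:Z) = (p - t * n) + 1.
  have -> : (x0 : nat)%:Z + (k0 : nat)%:Z = yp + (- t) * n by rewrite /= ekk; lia.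
  by rewrite waff wy; lia.
have rp' : res (p - t * n) = a.
  by have := resMD p (- t); rewrite mulNr rp.
have F0 : F A w x0 k0 = false.
  have E : (p - t * n + 1 < p - t * n) = false by lia.
  by rewrite /F w0 w1 E !andbF.
have F1 : F A (fun z => srefl a (w z)) x0 k0 = true.
  rewrite /F w0 w1 (srefl_down rp') (srefl_up rp') kkp /=.
  apply/andP; split; last by lia.
  apply/forallP => t'; apply/implyP => ht'.
  have := bxy (xp + (t' : nat)%:Z) ltac:(rewrite -ltz_nat ekk in ht'; lia).
  have -> : xp + (t' : nat)%:Z = (x0 : nat)%:Z + (t' : nat)%:Z + t * n by rewrite /=; lia.
  by rewrite inR_aff.
have uq : forall q : 'I_n * 'I_n,
    F A (fun z => srefl a (w z)) q.1 q.2 != F A w q.1 q.2 -> q = (x0, k0).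
  move=> [x1 k1] /= h1; apply: esym; apply: (@D_uniq a w) => //.
    by apply: (@D_char A) => //; rewrite F0 F1.
  exact: D_char h1.
rewrite /f (bigD1 (x0, k0)) //= [in RHS](bigD1 (x0, k0)) //= F0 F1 add1n add0n; congr S.
apply: eq_bigr => q hq.
case: (eqVneq (F A (fun z => srefl a (w z)) q.1 q.2) (F A w q.1 q.2)) => [->//|hq'].
by move: hq; rewrite (uq q hq') eqxx.
Qed.


Lemma ext_res (A : {set 'I_n}) (m : int -> int) (R : int -> int -> bool) :
  (forall z (t : int), m (z + t * n) = m z + t * n) ->
  (forall x y (t : int), R (x + t * n) (y + t * n) = R x y) ->
  (forall i : 'I_n, i \in A -> R (m (i : nat)%:Z) (m ((i : nat)%:Z + 1))) ->
  forall p, inR A p -> R (m p) (m (p + 1)).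
Proof.
move=> maff hR hi p hp.
have ep := divz_res p.
have -> : p = (ro p : nat)%:Z + divz p n * n by rewrite /=; lia.
have -> : (ro p : nat)%:Z + divz p n * n + 1 = ((ro p : nat)%:Z + 1) + divz p n * n by lia.
by rewrite !maff hR; apply: hi.
Qed.

Lemma L2 (A : {set 'I_n}) : A != setT -> forall N (u : seq 'I_n),
  all (fun a => a \in A) u -> f A (wact u) = N ->
  exists u2, weq u u2 /\ (size u2 <= f A (wact u))%N.
Proof.
move=> hA N; elim/ltn_ind: N => N IH u uA hN.
set w := wact u; set m := wact (rev u).
have mw : forall x, m (w x) = x by move=> x; apply: wact_rev_cancel.
have wm : forall x, w (m x) = x by move=> x; apply: wact_cancel_rev.
case: (boolP [exists i : 'I_n, (i \in A) && (m ((i : nat)%:Z + 1) < m (i : nat)%:Z)]).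
  move=> /existsP [i /andP [iA hi]].
  have ri : res (i : nat)%:Z = i by apply: res_nat.
  have uA' : all (fun a => a \in A) (i :: u) by rewrite /= iA.
  have fe := @f_exact A i (wact (i :: u)) (m ((i : nat)%:Z + 1)) (m (i : nat)%:Z) (i : nat)%:Z
     hA iA (@wact_inj (i :: u)) (@wact_aff (i :: u)) (fun y => @blk_wact A (i :: u) y uA')
     ltac:(by rewrite /= -/w wm srefl_down) ltac:(by rewrite /= -/w wm srefl_up) ri hi.
  have e1 : f A (fun z => srefl i (wact (i :: u) z)) = f A w.
    by apply: f_ext => z /=; rewrite srefl_inv.
  rewrite e1 in fe.
  have [u3 [h3 s3]] := IH (f A (wact (i :: u))) ltac:(by rewrite -hN fe) (i :: u) uA' erefl.
  exists (i :: u3); split.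
    by move=> x /=; rewrite -h3 /= srefl_inv.
  by rewrite /= fe ltnS.
rewrite negb_exists => /forallP hi.
have mb : forall y, blk A y (m y) by move=> y; apply: blk_wact; rewrite all_rev.
have inc : forall p, inR A p -> m p < m (p + 1).
  apply: (@ext_res A m (fun x y => x < y)) => //.
  - by move=> z t; apply: wact_aff.
  - by move=> x y t; rewrite ltrD2r.
  move=> i iA; have := hi i; rewrite iA /= -leNgt le_eqVlt => /orP[/eqP e|//].
  by move/wact_inj: e; lia.
have mid := inc_id hA mb inc.
exists [::]; split => // x /=.
by have := wm x; rewrite mid.
Qed.

Lemma longest_rev (A : {set 'I_n}) (u : seq 'I_n) : A != setT -> is_longest A u ->
  forall p, inR A p -> wact (rev u) (p + 1) < wact (rev u) p.
Proof.
move=> hA [uA hl].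
set w := wact u; set m := wact (rev u).
have mw : forall x, m (w x) = x by move=> x; apply: wact_rev_cancel.
have wm : forall x, w (m x) = x by move=> x; apply: wact_cancel_rev.
apply: (@ext_res A m (fun x y => y < x)).
- by move=> z t; apply: wact_aff.
- by move=> x y t; rewrite ltrD2r.
move=> i iA; rewrite ltNge le_eqVlt; apply/negP => /orP[/eqP e|hi].
  by move/wact_inj: e; lia.
have ri : res (i : nat)%:Z = i by apply: res_nat.
have fe := @f_exact A i w (m (i : nat)%:Z) (m ((i : nat)%:Z + 1)) (i : nat)%:Z
   hA iA (@wact_inj u) (@wact_aff u) (fun y => @blk_wact A u y uA) (wm _) (wm _) ri hi.
have [u2 [h2 s2]] := L2 hA uA erefl.
have uA' : all (fun a => a \in A) (i :: u) by rewrite /= iA.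
have [u' h' s'] := hl (i :: u) uA' u2 h2.
have := L1 A u'.
have -> : f A (wact u') = f A (fun z => srefl i (w z)).
  by apply: f_ext => z; rewrite -h'.
rewrite fe; move: s' s2; rewrite /w; lia.
Qed.


Definition key (al : nat) (a : 'I_n) : nat := ((a + n - al) %% n)%N.

Lemma keyE (al : nat) (a : 'I_n) : (al < n)%N ->
  key al a = if (al <= a)%N then (a - al)%N else (a + n - al)%N.
Proof.
move=> hal; rewrite /key; have ha := ltn_ord a; case: (leqP al a) => h.
  by rewrite -addnBAC // modnDr modn_small //; lia.
by rewrite modn_small //; lia.
Qed.

Lemma key_inj (al : nat) (a b : 'I_n) : (al < n)%N -> key al a = key al b -> a = b.
Proof.
move=> hal; rewrite !keyE //; have := ltn_ord a; have := ltn_ord b.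
move=> ha hb e; apply: val_inj => /=; move: e.
by case: (leqP al a) => h1; case: (leqP al b) => h2; lia.
Qed.

Lemma succ_modE (a : 'I_n) : ((a.+1 %% n) = if a.+1 == n then 0 else a.+1)%N.
Proof.
have := ltn_ord a; case: eqP => [->|ne] h; first by rewrite modnn.
by rewrite modn_small //; lia.
Qed.

Lemma M1 (al : nat) (a b : 'I_n) : (al < n)%N -> (0 < key al b)%N ->
  (key al b < key al a)%N -> (a.+1 %% n)%N != b.
Proof.
move=> hal; rewrite succ_modE !keyE //; have := ltn_ord a; have := ltn_ord b.
move=> ha hb; case: (leqP al a) => h1; case: (leqP al b) => h2; case: (a.+1 =P n) => h3 /=; lia.
Qed.

Lemma wact_fix (L : seq 'I_n) z :
  all (fun a : 'I_n => (res z != a) && (res z != (a.+1 %% n)%N)) L -> wact L z = z.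
Proof.
elim: L => //= a L IH /andP[/andP[h1 h2] hL].
by rewrite IH // srefl_E (negbTE h1) (negbTE h2).
Qed.

Lemma hX_gen (al : nat) (L : seq 'I_n) : (al < n)%N ->
  uniq L -> sorted (fun x y : 'I_n => (key al x <= key al y)%N) L ->
  all (fun a => 0 < key al a)%N L ->
  forall z, (has (fun a : 'I_n => (a.+1 %% n)%N == res z) L -> wact (rev L) z = z - 1) /\
            (~~ has (fun a : 'I_n => (a.+1 %% n)%N == res z) L -> z <= wact (rev L) z).
Proof.
move=> hal; elim: L => [|b L IH] /=.
  by move=> _ _ _ z; split => //; lia.
move=> /andP[bL uL] so /andP[kb kL] z.
have sL : sorted (fun x y : 'I_n => (key al x <= key al y)%N) L by apply: path_sorted so.
have mL : all (fun a : 'I_n => (key al b <= key al a)%N) L.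
  by apply: (order_path_min _ so) => x y w; apply: leq_trans.
have lt : forall a, a \in L -> (key al b < key al a)%N.
  move=> a aL; have := allP mL a aL; rewrite leq_eqVlt => /orP[/eqP e|//].
  by move: bL; rewrite (key_inj hal e) aL.
have nb : forall a, a \in L -> (a.+1 %% n)%N != b.
  by move=> a aL; exact: (M1 hal kb (lt a aL)).
have IHL := IH uL sL kL.
rewrite rev_cons -cats1 wact_cat /= srefl_E.
case: (res z =P b) => [rb|rb].
  have nh : ~~ has (fun a : 'I_n => (a.+1 %% n)%N == res z) (b :: L).
    rewrite /= rb (negbTE (succ_neq (ltn_ord b))) /=.
    by apply/hasPn => a aL; apply: nb.
  rewrite /= in nh; rewrite (negbTE nh); split => // _.
  have [i1 i2] := IHL (z + 1).
  case: (boolP (has (fun a : 'I_n => (a.+1 %% n)%N == res (z + 1)) L)) => hh; [rewrite (i1 hh)|have := i2 hh]; lia.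
case: (res z =P (b.+1 %% n)%N) => [rb2|rb2].
  split => [_|]; last by rewrite rb2 eqxx.
  rewrite wact_fix //; rewrite all_rev; apply/allP => a aL.
  have r1 : res (z - 1) = b.
    apply: succ_inj; [exact: res_lt|exact: ltn_ord|by rewrite -resB].
  rewrite r1; apply/andP; split.
    by apply/eqP => /val_inj e; move: bL; rewrite e aL.
  by rewrite eq_sym nb.
have [i1 i2] := IHL z.
have -> : ((b.+1 %% n)%N == res z) = false by apply/eqP => e; apply: rb2.
by split => [/= h|/= h]; [apply: i1|apply: i2].
Qed.


Lemma hX_prop (X : {set 'I_n}) : X != setT -> forall x,
  (inR X (x - 1) -> wact (hword X) x = x - 1) /\ (~~ inR X (x - 1) -> x <= wact (hword X) x).
Proof.
move=> hX x.
have [al0 [al0X eal]] : exists a : 'I_n, a \notin X /\ aleph X = a.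
  rewrite /aleph; case: pickP => [a|h0]; first by rewrite inE => ha; exists a.
  by have [j jX] := exists_notin hX; move: (h0 j); rewrite inE jX.
set L := sort (fun x y => (hkey X x <= hkey X y)%N) (enum X).
have hal : (aleph X < n)%N by rewrite eal.
have uL : uniq L by rewrite sort_uniq enum_uniq.
have sL : sorted (fun x y : 'I_n => (key (aleph X) x <= key (aleph X) y)%N) L.
  by apply: sort_sorted => a b; apply: leq_total.
have kL : all (fun a => 0 < key (aleph X) a)%N L.
  apply/allP => a; rewrite mem_sort mem_enum => aX.
  rewrite lt0n; apply/eqP => e.
  have : key (aleph X) a = key (aleph X) al0.
    by rewrite e /key eal addnC addnK modnn.
  by move/(key_inj hal) => ea; move: al0X; rewrite -ea aX.
have [h1 h2] := hX_gen hal uL sL kL x.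
have eqh : has (fun a : 'I_n => (a.+1 %% n)%N == res x) L = inR X (x - 1).
  apply/hasP/idP => [[a aL /eqP e]|hx].
    move: aL; rewrite mem_sort mem_enum.
    have -> : a = ro (x - 1); last by [].
    apply: val_inj; apply: succ_inj; [exact: ltn_ord|exact: res_lt|by rewrite e -resB].
  exists (ro (x - 1)); first by rewrite mem_sort mem_enum.
  by rewrite /= -resB.
rewrite /hword -/L -eqh; split; [exact: h1|exact: h2].
Qed.

Lemma rev_formula (A : {set 'I_n}) (u : seq 'I_n) : A != setT -> is_longest A u ->
  forall lo hi x, lo <= x <= hi -> (forall z, lo <= z < hi -> inR A z) ->
  ~~ inR A (lo - 1) -> ~~ inR A hi -> wact (rev u) x = lo + hi - x.
Proof.
move=> hA hl; apply: dec_rev.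
  by move=> y; apply: blk_wact; rewrite all_rev; case: hl.
exact: longest_rev.
Qed.


Lemma sub_I (I J X Y : {set 'I_n}) (wI wJ : seq 'I_n) :
  I != setT -> J != setT -> X != setT -> Y != setT ->
  tauS I \subset X -> is_longest I wI -> is_longest J wJ ->
  (forall x, wact wI (wact (hword X) x) = wact wJ (wact (hword Y) x)) ->
  I \subset J.
Proof.
move=> hI hJ hX hY tI lI lJ g.
apply/subsetP => i iI.
set p := (i : nat)%:Z.
have pI : inR I p by rewrite /inR ro_nat.
have [lo [l1 l2 l3]] := lo_ex p hI.
have [hi [h1 h2 h3]] := hi_ex p hI.
have phi : p < hi.
  by rewrite lt_neqAle h1 andbT; apply/eqP => e; move: h3; rewrite -e pI.
have inb : forall z, lo <= z < hi -> inR I z.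
  by move=> z hz; case: (ltP z p) => hzp; [apply: l2|apply: h2]; lia.
have hi1 : inR I (hi - 1) by apply: inb; lia.
have hiX : inR X hi.
  rewrite /inR; apply: (subsetP tI); apply/imsetP; exists (ro (hi - 1)) => //.
  by apply: val_inj; rewrite /= -resB.
have hh : wact (hword X) (hi + 1) = hi.
  by have [e _] := hX_prop hX (hi + 1); rewrite e ?addrK.
have wl : wact wI hi = lo.
  have lx : lo <= lo <= hi by rewrite lexx /=; lia.
  have e := @rev_formula I wI hI lI lo hi lo lx inb l3 h3.
  have e' : lo + hi - lo = hi by rewrite addrC addKr.
  by rewrite e' in e; rewrite -e wact_cancel_rev.
have := g (hi + 1); rewrite hh wl.
set y := wact (hword Y) (hi + 1) => ey.
have yge : hi <= y.
  have [e1 e2] := hX_prop hY (hi + 1); rewrite addrK in e1 e2.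
  by case: (boolP (inR Y hi)) => h; [rewrite /y (e1 h)|have := e2 h; rewrite -/y; lia].
have bJ := @blk_wact J wJ y (proj1 lJ); rewrite -ey in bJ.
have := bJ p ltac:(lia).
by rewrite /inR ro_nat.
Qed.

Lemma w_eq (I : {set 'I_n}) (u v : seq 'I_n) : I != setT ->
  is_longest I u -> is_longest I v -> forall x, wact u x = wact v x.
Proof.
move=> hI lu lv x.
have [lo [l1 l2 l3]] := lo_ex x hI.
have [hi [h1 h2 h3]] := hi_ex x hI.
have inb : forall z, lo <= z < hi -> inR I z.
  by move=> z hz; case: (ltP z x) => hzx; [apply: l2|apply: h2]; lia.
have ev := @rev_formula I v hI lv lo hi (wact v x).
have eu := @rev_formula I u hI lu lo hi (wact v x).
have bv := @blk_range I (wact v) lo hi x (fun y => @blk_wact I v y (proj1 lv)) ltac:(apply/andP; split => //) l3 h3.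
have mm : wact (rev u) (wact v x) = x.
  by rewrite (eu bv inb l3 h3) -(ev bv inb l3 h3) wact_rev_cancel.
by rewrite -{1}mm wact_cancel_rev.
Qed.

Lemma sub_X (I X Y : {set 'I_n}) (wI wJ : seq 'I_n) :
  I != setT -> X != setT -> Y != setT ->
  is_longest I wI -> is_longest I wJ ->
  (forall x, wact wI (wact (hword X) x) = wact wJ (wact (hword Y) x)) ->
  X \subset Y.
Proof.
move=> hI hX hY lI lJ g.
apply/subsetP => i iX.
set p := (i : nat)%:Z.
have pX : inR X p by rewrite /inR ro_nat.
have [e1 _] := hX_prop hX (p + 1); rewrite addrK in e1.
have := g (p + 1); rewrite (e1 pX) (w_eq hI lI lJ) => /wact_inj e.
have [_ f2] := hX_prop hY (p + 1); rewrite addrK in f2.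
case: (boolP (inR Y p)) => h; first by move: h; rewrite /inR ro_nat.
by have := f2 h; rewrite -e; lia.
Qed.

End Aff.

Theorem lemma10p8 (n : nat) (hn : 2 <= n)
  (I I' X X' : {set 'I_n}) (wI wI' : seq 'I_n) :
  I != setT -> I' != setT -> X != setT -> X' != setT ->
  tauS I \subset X -> tauS I' \subset X' ->
  is_longest I wI -> is_longest I' wI' ->
  weq (wI ++ hword X) (wI' ++ hword X') ->
  I = I' /\ X = X'.
Proof.
move=> hI hI' hX hX' tI tI' lI lI' e.
have g : forall x, wact wI (wact (hword X) x) = wact wI' (wact (hword X') x).
  by move=> x; rewrite -!wact_cat; apply: e.
have g' : forall x, wact wI' (wact (hword X') x) = wact wI (wact (hword X) x).
  by move=> x; rewrite g.
have eI : I = I'.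
  by apply/eqP; rewrite eqEsubset (sub_I hn hI hI' hX hX' tI lI lI' g) (sub_I hn hI' hI hX' hX tI' lI' lI g').
subst I'; split => //.
by apply/eqP; rewrite eqEsubset (sub_X hn hI hX hX' lI lI' g) (sub_X hn hI hX' hX lI' lI g').
Qed.
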